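(* For a real parameter $g$, let $H^{(7)}(g)$ be the $7\times7$ real matrix with diagonal $(1,3,5,7,9,11,13)$, entries $H_{1,3}=\sqrt3 g$, $H_{2,4}=\sqrt2 g$, $H_{3,5}=2g$, $H_{4,6}=\sqrt2 g$, $H_{5,7}=\sqrt3 g$, entries $H_{n+2,n}=-H_{n,n+2}$ for $n=1,\dots,5$, and all other entries zero. Then the eigenvalues of $H^{(7)}(g)$ are $$E_m(g)=7+m\sqrt{4-g^2},\qquad m\in\{-3,-2,-1,0,1,2,3\}.$$ In particular, for $0\le g<2$ all seven eigenvalues are real and pairwise distinct, while at $g=2$ all of them coincide at $\eta=7$ and $H^{(7)}(2)$ is not diagonalizable: its Jordan form consists of two Jordan blocks for the eigenvalue $7$, of sizes $4$ and $3$ (geometric multiplicity $2$). *)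

(* Defs.v *)
From HB Require Import structures.
From mathcomp Require Import all_boot all_order all_algebra.
From mathcomp Require Import complex.
Set Implicit Arguments. Unset Strict Implicit. Unset Printing Implicit Defensive.
Import Order.TTheory GRing.Theory Num.Theory.
Local Open Scope ring_scope.

Definition Hcoef (R : rcfType) (n : nat) : R :=
  match n with
  | 0 => Num.sqrt 3
  | 1 => Num.sqrt 2
  | 2 => 2
  | 3 => Num.sqrt 2
  | 4 => Num.sqrt 3
  | _ => 0
  end.

(* H^(7)(g), with 0-based indices i,j : 'I_7 (paper index = i+1).
   Diagonal 2i+1 = 1,3,...,13; H i (i+2) = c_i g; H (i+2) i = - c_i g. *)
Definition H7 (R : rcfType) (g : R) : 'M[R]_7 :=
  \matrix_(i < 7, j < 7)
    if i == j :> nat then (2 * i + 1)%:R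
    else if (j == i + 2 :> nat) then Hcoef R i * g
    else if (i == j + 2 :> nat) then - (Hcoef R j * g)
    else 0.

Definition jordan_block (R : nzRingType) (n : nat) (a : R) : 'M[R]_n :=
  \matrix_(i < n, j < n)
    if i == j :> nat then a else if (j == i.+1 :> nat) then 1 else 0.

(* E_m(g) with the given square root s of 4 - g^2, m = k - 3, k : 'I_7. *)
Definition Eval (F : nzRingType) (s : F) (k : nat) : F := 7 + (k%:R - 3) * s.

(* Main.v *)
Require Import Defs.
From HB Require Import structures.
From mathcomp Require Import all_boot all_order all_algebra.
From mathcomp Require Import fingroup perm complex ring lra.
Import Order.TTheory GRing.Theory Num.Theory.
Local Open Scope ring_scope.

Ltac nsimp := rewrite /= /bump /addn /addn_rec /muln /muln_rec /modn /=.

Section Det.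
Variable T : comNzRingType.
Definition d3 (F : nat -> nat -> T) :=
  F 0%N 0%N * (F 1%N 1%N * F 2%N 2%N - F 1%N 2%N * F 2%N 1%N)
  - F 0%N 1%N * (F 1%N 0%N * F 2%N 2%N - F 1%N 2%N * F 2%N 0%N)
  + F 0%N 2%N * (F 1%N 0%N * F 2%N 1%N - F 1%N 1%N * F 2%N 0%N).

Lemma det3F (F : nat -> nat -> T) : \det (\matrix_(i < 3, j < 3) F i j) = d3 F.
Proof.
rewrite (expand_det_row _ 0) !big_ord_recl big_ord0 /cofactor.
rewrite !(expand_det_row _ 0) !big_ord_recl !big_ord0 /cofactor !det_mx11 !mxE.
rewrite /d3; nsimp. ring.
Qed.

Lemma minor4 (F : nat -> nat -> T) (j : 'I_4) :
  \det (row' 0 (col' j (\matrix_(i < 4, k < 4) F i k))) = d3 (fun a b => F (bump 0 a) (bump j b)).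
Proof.
rewrite -(det3F (fun a b => F (bump 0 a) (bump j b))); congr (\det _).
by apply/matrixP => i k; rewrite !mxE.
Qed.

Definition d4 (F : nat -> nat -> T) :=
  F 0%N 0%N * d3 (fun i k => F i.+1 (bump 0 k)) - F 0%N 1%N * d3 (fun i k => F i.+1 (bump 1 k))
  + F 0%N 2%N * d3 (fun i k => F i.+1 (bump 2 k)) - F 0%N 3%N * d3 (fun i k => F i.+1 (bump 3 k)).

Lemma det4F (F : nat -> nat -> T) : \det (\matrix_(i < 4, j < 4) F i j) = d4 F.
Proof.
rewrite (expand_det_row _ 0) !big_ord_recl big_ord0 /cofactor !minor4 !mxE.
rewrite /d4 /d3; nsimp. ring.
Qed.
End Det.
Arguments d3 {T}.
Arguments d4 {T}.

Definition o7 (n : nat) : 'I_7 := inord n.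
Definition sig7f (i : 'I_7) : 'I_7 := o7 (nth 0%N [:: 0; 2; 4; 6; 1; 3; 5]%N i).
Definition tau7f (i : 'I_7) : 'I_7 := o7 (nth 0%N [:: 0; 4; 1; 5; 2; 6; 3]%N i).
Lemma sig7K : cancel sig7f tau7f.
Proof. by move=> [[|[|[|[|[|[|[|i]]]]]]] Hi] //; apply/val_inj; rewrite /= /tau7f /sig7f /o7 /= !inordK. Qed.
Lemma sig7f_inj : injective sig7f. Proof. exact: can_inj sig7K. Qed.
Definition sig7 : 'S_7 := perm sig7f_inj.

Lemma char_poly_sim (T : comNzRingType) n (P Q A : 'M[T]_n) :
  P *m Q = 1%:M -> char_poly (P *m A *m Q) = char_poly A.
Proof.
move=> PQ.
have mPQ : map_mx polyC P *m map_mx polyC Q = 1%:M by rewrite -map_mxM PQ map_mx1.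
rewrite /char_poly.
have -> : char_poly_mx (P *m A *m Q) = map_mx polyC P *m char_poly_mx A *m map_mx polyC Q.
  rewrite /char_poly_mx mulmxBr mulmxBl !map_mxM -!mulmxA.
  congr (_ - _); by rewrite mul_scalar_mx -scalemxAr mPQ scalemx1.
rewrite !det_mulmx -mulrA mulrCA -det_mulmx mPQ det1.
by rewrite mulr1.
Qed.

Definition hN (R : rcfType) (g : R) (a b : nat) : R :=
  if a == b then (2 * a + 1)%:R
  else if b == (a + 2)%N then Hcoef R a * g
  else if a == (b + 2)%N then - (Hcoef R b * g) else 0.

Arguments hN {R}.
Section CP.
Variables (R : rcfType) (T : comNzRingType) (f : {rmorphism R -> T}) (g : R).
Definition A7 := map_mx f (H7 g).
Definition Bm := row_perm sig7 (col_perm sig7 A7).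

Lemma charB : char_poly Bm = char_poly A7.
Proof. by rewrite /Bm row_permE col_permE mulmxA char_poly_sim // -perm_mxM mulgV perm_mx1. Qed.

Lemma ur0 : ursubmx (Bm : 'M_(4+3)) = 0.
Proof. apply/matrixP => i j; rewrite !mxE !permE /sig7f /o7.
case: i => [[|[|[|[|i]]]] Hi] //=; case: j => [[|[|[|j]]] Hj] //=; rewrite !inordK //=;
 rewrite ?mul0r ?oppr0; exact: raddf0.
Qed.
Lemma dl0 : dlsubmx (Bm : 'M_(4+3)) = 0.
Proof. apply/matrixP => i j; rewrite !mxE !permE /sig7f /o7.
case: i => [[|[|[|i]]] Hi] //=; case: j => [[|[|[|[|j]]]] Hj] //=; rewrite !inordK //=;
 rewrite ?mul0r ?oppr0; exact: raddf0.
Qed.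

Lemma charsplit : char_poly A7 =
  char_poly (ulsubmx (Bm : 'M_(4+3))) * char_poly (drsubmx (Bm : 'M_(4+3))).
Proof.
have E : (Bm : 'M_(4+3)) = block_mx (ulsubmx (Bm : 'M_(4+3))) 0 0 (drsubmx (Bm : 'M_(4+3))).
  by rewrite -{1}(submxK (Bm : 'M_(4+3))) ur0 dl0.
rewrite -charB /char_poly {1}E.
have := det_ublock (char_poly_mx (ulsubmx (Bm : 'M_(4+3)))) 0 (char_poly_mx (drsubmx (Bm : 'M_(4+3)))).
by rewrite -char_block_diag_mx.
Qed.

Definition F4 (a b : nat) : {poly T} := 'X *+ (a == b) - (f (hN g (2 * a) (2 * b)))%:P.
Definition F3 (a b : nat) : {poly T} := 'X *+ (a == b) - (f (hN g (2 * a + 1) (2 * b + 1)))%:P.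

Lemma ul_eq : char_poly_mx (ulsubmx (Bm : 'M_(4+3))) = \matrix_(i < 4, j < 4) F4 i j.
Proof.
apply/matrixP => i j; rewrite !mxE !permE /sig7f /o7 /F4 /hN.
case: i => [[|[|[|[|i]]]] Hi] //; case: j => [[|[|[|[|j]]]] Hj] //; rewrite !inordK //; nsimp; rewrite ?inordK //; nsimp.
Qed.

Lemma dr_eq : char_poly_mx (drsubmx (Bm : 'M_(4+3))) = \matrix_(i < 3, j < 3) F3 i j.
Proof.
apply/matrixP => i j; rewrite !mxE !permE /sig7f /o7 /F3 /hN.
case: i => [[|[|[|i]]] Hi] //; case: j => [[|[|[|j]]] Hj] //; rewrite !inordK //; nsimp; rewrite ?inordK //; nsimp.
Qed.

Lemma char4 : char_poly (ulsubmx (Bm : 'M_(4+3))) = d4 (fun a b => F4 a b).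
Proof. by rewrite /char_poly ul_eq det4F. Qed.
Lemma char3 : char_poly (drsubmx (Bm : 'M_(4+3))) = d3 (fun a b => F3 a b).
Proof. by rewrite /char_poly dr_eq det3F. Qed.

Lemma char4E : d4 (fun a b => F4 a b) =
  (('X - 7%:P) ^+ 2 - 4%:P + ((f g)%:P) ^+ 2) * (('X - 7%:P) ^+ 2 - 36%:P + 9%:P * ((f g)%:P) ^+ 2).
Proof.
rewrite /d4 /d3 /F4 /hN; nsimp.
rewrite ?rmorphN ?rmorphM ?rmorph0 ?rmorph_nat ?mulr1n ?mulr0n.
have hc : ((f (Num.sqrt 3))%:P) ^+ 2 = 3 :> {poly T}.
  by rewrite -!rmorphXn sqr_sqrtr ?ler0n // !rmorph_nat.
set c := (f (Num.sqrt 3))%:P; set G := (f g)%:P.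
apply: (@etrans _ _ (('X - 1) * ('X - 5) * ('X - 9) * ('X - 13) + c^+2 * G^+2 * ('X - 9) * ('X - 13)
   + 4 * G^+2 * ('X - 1) * ('X - 13) + c^+2 * G^+2 * ('X - 1) * ('X - 5) + c^+2 * c^+2 * G^+2 * G^+2)).
  ring.
rewrite hc. ring.
Qed.
End CP.
Arguments F3 {R T}. Arguments F4 {R T}. Arguments A7 {R T}. Arguments Bm {R T}.
Section CP2.
Variables (R : rcfType) (T : comNzRingType) (f : {rmorphism R -> T}) (g : R).
Lemma char3E : d3 (fun a b => F3 f g a b) =
  ('X - 7%:P) * (('X - 7%:P) ^+ 2 - 16%:P + 4%:P * ((f g)%:P) ^+ 2).
Proof.
rewrite /d3 /F3 /hN; nsimp.
rewrite ?rmorphN ?rmorphM ?rmorph0 ?rmorph_nat ?mulr1n ?mulr0n.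
have hc : ((f (Num.sqrt 2))%:P) ^+ 2 = 2 :> {poly T}.
  by rewrite -!rmorphXn sqr_sqrtr ?ler0n // !rmorph_nat.
set c := (f (Num.sqrt 2))%:P; set G := (f g)%:P.
apply: (@etrans _ _ (('X - 3) * ('X - 7) * ('X - 11) + c^+2 * G^+2 * ('X - 11) + c^+2 * G^+2 * ('X - 3))).
  ring.
rewrite hc. ring.
Qed.

Lemma charA7 (s : T) : s ^+ 2 = f (4 - g ^+ 2) ->
  char_poly (A7 f g) = \prod_(k < 7) ('X - (Eval s k)%:P).
Proof.
move=> hs.
rewrite charsplit char4 char3 char4E char3E.
rewrite -(big_mkord xpredT (fun k => 'X - (Eval s k)%:P)) /index_iota subn0.
rewrite !big_cons big_nil /Eval.
rewrite ?polyCD ?polyCM ?polyCB ?polyC_natr.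
have hsP : (s%:P) ^+ 2 = 4 - ((f g)%:P) ^+ 2 :> {poly T}.
  by rewrite -rmorphXn hs rmorphB rmorphXn rmorph_nat rmorphB rmorphXn rmorph_nat.
set S := s%:P; set G := (f g)%:P.
apply: (@etrans _ _ ((('X - 7%:P) ^+ 2 - S^+2) * (('X - 7%:P) ^+ 2 - 9 * S^+2) * (('X - 7%:P) * (('X - 7%:P) ^+ 2 - 4 * S^+2)))).
  rewrite hsP; ring.
ring.
Qed.
End CP2.

Section Jordan.
Variable R : rcfType.
Definition sa : R := Num.sqrt 3.
Definition sb : R := Num.sqrt 2.
Definition Ptab : seq (seq R) :=
  [:: [:: 1; 0; 0; 0; 0; 0; 0];
      [:: -6; 0; 2 * sa; 0; 0; 0; 0];
      [:: 24; 0; -16 * sa; 0; 8 * sa; 0; 0];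
      [:: -48; 0; 48 * sa; 0; -48 * sa; 0; 48];
      [:: 0; 1; 0; 0; 0; 0; 0];
      [:: 0; -4; 0; 2 * sb; 0; 0; 0];
      [:: 0; 8; 0; -8 * sb; 0; 8; 0]].
Definition Qtab : seq (seq R) :=
  [:: [:: 1; 0; 0; 0; 0; 0; 0];
      [:: 0; 0; 0; 0; 1; 0; 0];
      [:: sa; sa / 6; 0; 0; 0; 0; 0];
      [:: 0; 0; 0; 0; sb; sb / 4; 0];
      [:: sa; sa / 3; sa / 24; 0; 0; 0; 0];
      [:: 0; 0; 0; 0; 1; 1 / 2; 1 / 8];
      [:: 1; 1 / 2; 1 / 8; 1 / 48; 0; 0; 0]].
Definition Pj : 'M[R]_7 := \matrix_(i < 7, j < 7) nth 0 (nth [::] Ptab i) j.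
Definition Qj : 'M[R]_7 := \matrix_(i < 7, j < 7) nth 0 (nth [::] Qtab i) j.
Definition Jmat : 'M[R]_7 := \matrix_(i < 7, j < 7)
  if i == j :> nat then 7 else if (j == i.+1 :> nat) && (i != 3 :> nat) then 1 else 0.

Lemma sa2 : sa * sa = 3. Proof. by rewrite -expr2 sqr_sqrtr ?ler0n. Qed.
Lemma sb2 : sb * sb = 2. Proof. by rewrite -expr2 sqr_sqrtr ?ler0n. Qed.

Lemma PQ : Pj *m Qj = 1%:M.
Proof.
have h3 := sa2; have h2 := sb2.
apply/matrixP => i j; rewrite !mxE !big_ord_recl big_ord0 !mxE.
case: i => [[|[|[|[|[|[|[|i]]]]]]] Hi] //; case: j => [[|[|[|[|[|[|[|j]]]]]]] Hj] //; nsimp; lra.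
Qed.

Lemma PA : Pj *m H7 2 = Jmat *m Pj.
Proof.
have h3 := sa2; have h2 := sb2.
apply/matrixP => i j; rewrite !mxE !big_ord_recl !big_ord0 !mxE.
case: i => [[|[|[|[|[|[|[|i]]]]]]] Hi] //; case: j => [[|[|[|[|[|[|[|j]]]]]]] Hj] //; nsimp; rewrite /sa /sb in h3 h2 *; lra.
Qed.

Definition Kmat : 'M[R]_7 := \matrix_(i < 7, j < 7)
  if (j == i.+1 :> nat) && (i != 3 :> nat) then 1 else 0.

Lemma Jblock : (block_mx (jordan_block 4 (7:R)) 0 0 (jordan_block 3 (7:R)) : 'M_7) = Jmat.
Proof.
apply: (etrans _ (submxK (Jmat : 'M_(4+3, 4+3)))).
congr block_mx; apply/matrixP => i j; rewrite !mxE.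
- case: i => [[|[|[|[|i]]]] Hi] //; case: j => [[|[|[|[|j]]]] Hj] //.
- case: i => [[|[|[|[|i]]]] Hi] //; case: j => [[|[|[|j]]] Hj] //.
- case: i => [[|[|[|i]]] Hi] //; case: j => [[|[|[|[|j]]]] Hj] //.
- case: i => [[|[|[|i]]] Hi] //; case: j => [[|[|[|j]]] Hj] //.
Qed.

Lemma JK : Jmat - 7%:M = Kmat.
Proof.
apply/matrixP => i j; rewrite !mxE.
case: i => [[|[|[|[|[|[|[|i]]]]]]] Hi] //; case: j => [[|[|[|[|[|[|[|j]]]]]]] Hj] //; nsimp;
  rewrite ?mulr1n ?mulr0n ?subrr ?subr0 //.
Qed.

Lemma Pu : Pj \in unitmx. Proof. by case: (mulmx1_unit PQ). Qed.
Lemma Qu : Qj \in unitmx. Proof. by case: (mulmx1_unit PQ). Qed.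

Lemma conjJ : Pj *m H7 2 *m invmx Pj =
   block_mx (jordan_block 4 (7:R)) 0 0 (jordan_block 3 (7:R)).
Proof. by rewrite PA -mulmxA mulmxV ?Pu // mulmx1 Jblock. Qed.

Lemma PNQ : Pj *m (H7 2 - 7%:M) *m Qj = Kmat.
Proof.
rewrite mulmxBr mulmxBl PA mul_mx_scalar -!mulmxA PQ mulmx1 -scalemxAl PQ scalemx1.
exact: JK.
Qed.
End Jordan.

Definition o7b (n : nat) : 'I_7 := inord n.
Definition rrf (i : 'I_7) : 'I_7 := o7b (nth 0%N [:: 0; 1; 2; 4; 5; 3; 6]%N i).
Definition rrg (i : 'I_7) : 'I_7 := o7b (nth 0%N [:: 0; 1; 2; 5; 3; 4; 6]%N i).
Lemma rrK : cancel rrf rrg.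
Proof. by move=> [[|[|[|[|[|[|[|i]]]]]]] Hi] //; apply/val_inj; rewrite /= /rrf /rrg /o7b /= !inordK. Qed.
Definition rr : 'S_7 := perm (can_inj rrK).
Definition ccf (i : 'I_7) : 'I_7 := o7b (nth 0%N [:: 1; 2; 3; 5; 6; 0; 4]%N i).
Definition ccg (i : 'I_7) : 'I_7 := o7b (nth 0%N [:: 5; 0; 1; 2; 6; 3; 4]%N i).
Lemma ccK : cancel ccf ccg.
Proof. by move=> [[|[|[|[|[|[|[|i]]]]]]] Hi] //; apply/val_inj; rewrite /= /ccf /ccg /o7b /= !inordK. Qed.
Definition cc : 'S_7 := perm (can_inj ccK).

Lemma rank_lunit (F : fieldType) n (U X : 'M[F]_n) : U \in unitmx -> \rank (U *m X) = \rank X.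
Proof. by move=> Uu; rewrite -mxrank_tr trmx_mul mxrankMfree ?mxrank_tr // row_free_unit unitmx_tr. Qed.

Lemma rank_conj (F : fieldType) n (U V X : 'M[F]_n) :
  U \in unitmx -> V \in unitmx -> \rank (U *m X *m V) = \rank X.
Proof. by move=> Uu Vu; rewrite mxrankMfree ?row_free_unit // rank_lunit. Qed.

Lemma rankK (R : rcfType) : \rank (Kmat R) = 5%N.
Proof.
have E : row_perm rr (col_perm cc (Kmat R)) = pid_mx 5.
  apply/matrixP => i j; rewrite !mxE !permE /rrf /ccf /o7b.
  case: i => [[|[|[|[|[|[|[|i]]]]]]] Hi] //; case: j => [[|[|[|[|[|[|[|j]]]]]]] Hj] //;
   rewrite !inordK //.
rewrite -(@rank_conj _ _ (perm_mx rr) (perm_mx cc^-1) (Kmat R)) ?unitmx_perm //.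
by rewrite -mulmxA -col_permE -row_permE E rank_pid_mx.
Qed.

Theorem mainTheorem3 (R : rcfType) :
  (* eigenvalues (with algebraic multiplicity, over C = R[i]) for every real g *)
  (forall (g : R) (s : R[i]), s ^+ 2 = ((4 - g ^+ 2)%:C)%C ->
     char_poly (map_mx (fun x : R => (x%:C)%C) (H7 g))
       = \prod_(k < 7) ('X - (Eval s k)%:P))
  /\
  (* for 0 <= g < 2: seven real, pairwise distinct eigenvalues *)
  (forall g : R, 0 <= g < 2 ->
     char_poly (H7 g) = \prod_(k < 7) ('X - (Eval (Num.sqrt (4 - g ^+ 2)) k)%:P)
     /\ injective (fun k : 'I_7 => Eval (Num.sqrt (4 - g ^+ 2)) k))
  /\
  (* at g = 2 *)
  (char_poly (H7 (2 : R)) = ('X - 7%:P) ^+ 7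
   /\ ~ diagonalizable (H7 (2 : R))
   /\ \rank (eigenspace (H7 (2 : R)) 7) = 2%N
   /\ exists P : 'M[R]_7, P \in unitmx /\
        P *m H7 (2 : R) *m invmx P
          = block_mx (jordan_block 4 (7 : R)) 0 0 (jordan_block 3 (7 : R))).

Proof.
have HA2 : A7 (@idfun R) 2 = H7 2 by rewrite /A7 map_mx_id.
have char2 : char_poly (H7 (2 : R)) = ('X - 7%:P) ^+ 7.
  rewrite -HA2 (@charA7 R R (@idfun R) 2 0); last first.
    by rewrite /= expr0n /=; lra.
  rewrite (eq_bigr (fun _ => 'X - 7%:P)) ?prodr_const ?card_ord // => k _.
  by rewrite /Eval mulr0 addr0.
split.
  move=> g s hs; exact: (@charA7 R _ (real_complex R) g s).
split.
  move=> g /andP [g0 g2].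
  have h4 : 0 < 4 - g ^+ 2 by nra.
  split.
    have HA : A7 (@idfun R) g = H7 g by rewrite /A7 map_mx_id.
    rewrite -HA; apply: (@charA7 R R (@idfun R) g) => /=; rewrite sqr_sqrtr //; exact: ltW.
  move=> k l /=; rewrite /Eval => /addrI /mulIf.
  have -> : Num.sqrt (4 - g ^+ 2) != 0 by rewrite gt_eqF // sqrtr_gt0.
  move=> /(_ isT) /addIr /eqP; rewrite eqr_nat => /eqP; exact: val_inj.
split; first exact: char2.
split.
  case=> P0 P0u; rewrite /similar_to /= conjumx //.
  set D := P0 *m H7 2 *m invmx P0 => Hd.
  have cD : char_poly D = ('X - 7%:P) ^+ 7 by rewrite char_poly_sim ?mulmxV.
  have tD : char_poly D = \prod_i ('X - (D i i)%:P).
    by rewrite char_poly_trig // is_diag_mx_is_trig.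
  have D7 : forall i, D i i = 7.
    move=> i; have : root (char_poly D) (D i i).
      rewrite tD; apply/rootP; rewrite horner_prod (bigD1 i) //= hornerXsubC subrr mul0r //.
    rewrite cD => /rootP; rewrite horner_exp hornerXsubC => /eqP.
    by rewrite expf_eq0 /= subr_eq0 => /eqP.
  have DE : D = 7%:M.
    apply/matrixP => i j; rewrite [RHS]mxE; case: (eqVneq i j) => [<-|nij].
      by rewrite D7 ?eqxx mulr1n.
    by move/is_diag_mxP: Hd => /(_ i j nij) ->; by rewrite mulr0n.
  have : H7 (2 : R) = invmx P0 *m D *m P0.
    by rewrite /D !mulmxA mulVmx // mul1mx -mulmxA mulVmx // mulmx1.
  rewrite DE mul_mx_scalar -scalemxAl mulVmx // scalemx1 => /matrixP /(_ 0 0).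
  rewrite !mxE /=; nsimp; rewrite mulr1n; lra.
split.
  rewrite /eigenspace mxrank_ker.
  by rewrite -(@rank_conj _ _ (Pj R) (Qj R) _ (Pu R) (Qu R)) PNQ rankK.
exists (Pj R); split; [exact: Pu | exact: conjJ].
Qed.
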